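(* Let $G\leq\operatorname{Homeo}(\mathfrak{C})$ be approximately full. Then $G$ is flexible if and only if $G$ is vigorous.
   Context: $\mathfrak{C}$ denotes a Cantor space (a space homeomorphic to $\{0,1\}^\omega$). Groups of homeomorphisms act on the right. $K_{\mathfrak{C}}$ denotes the set of non-empty proper clopen subsets of $\mathfrak{C}$. For $\gamma\in\operatorname{Homeo}(\mathfrak{C})$, $\operatorname{supp}(\gamma)=\{p\in\mathfrak{C}: p\gamma\neq p\}$. A subset $S\subseteq \operatorname{Homeo}(\mathfrak{C})$ is vigorous if for all clopen $A,B,C\subseteq\mathfrak{C}$ with $B,C$ non-empty proper subsets of $A$ there is $\gamma\in S$ with $\operatorname{supp}(\gamma)\subseteq A$ and $B\gamma\subseteq C$. $G$ is flexible if for all $U,V\in K_{\mathfrak{C}}$ there is $\gamma\in G$ with $U\gamma\subseteq V$. $G$ is approximately full if whenever $\Gamma\subseteq G$ is finite, $\{D_\gamma\}_{\gamma\in\Gamma}$ is a partition of $\mathfrak{C}$ into clopen sets such that $\{D_\gamma\gamma\}_{\gamma\in\Gamma}$ is also a partition of $\mathfrak{C}$, and $\delta\in\Gamma$, there exists $\chi\in G$ with $\chi|_{D_\gamma}=\gamma|_{D_\gamma}$ for every $\gamma\in\Gamma\setminus\{\delta\}$. *)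

(* Defs.v *)
From HB Require Import structures.
From mathcomp Require Import all_boot all_order all_algebra.
From mathcomp Require Import all_classical all_reals topology cantor.
Set Implicit Arguments.
Unset Strict Implicit.
Unset Printing Implicit Defensive.
Local Open Scope classical_set_scope.

Notation C := cantor_space.

Definition is_homeo (f : C -> C) : Prop :=
  continuous f /\ exists g : C -> C, [/\ continuous g, cancel f g & cancel g f].

Definition homeo_subgroup (G : set (C -> C)) : Prop :=
  [/\ forall f, G f -> is_homeo f,
      G id,
      forall f g, G f -> G g -> G (f \o g) &
      forall f, G f -> exists2 g, G g & (cancel f g /\ cancel g f)].

Definition supp (f : C -> C) : set C := [set p | f p <> p].

Definition K_C (U : set C) : Prop := clopen U /\ U !=set0 /\ U != setT.

(* Right action: B gamma is the image f @` B. *)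
Definition vigorous (S : set (C -> C)) : Prop :=
  forall A B D : set C, clopen A -> clopen B -> clopen D ->
    B !=set0 -> B `<=` A -> B != A ->
    D !=set0 -> D `<=` A -> D != A ->
    exists2 g, S g & (supp g `<=` A /\ g @` B `<=` D).

Definition flexible (G : set (C -> C)) : Prop :=
  forall U V, K_C U -> K_C V -> exists2 g, G g & g @` U `<=` V.

Definition clopen_partition (I : finType) (D : I -> set C) : Prop :=
  [/\ forall i, clopen (D i),
      forall i, D i !=set0,
      forall i j, i != j -> D i `&` D j = set0 &
      \bigcup_(i in [set: I]) D i = setT].

(* Approximately full: a finite Gamma ⊆ G is encoded as an injective
   family gam : I -> (C -> C) indexed by a finite type I. *)
Definition approximately_full (G : set (C -> C)) : Prop :=
  forall (I : finType) (gam : I -> C -> C) (D : I -> set C),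
    injective gam -> (forall i, G (gam i)) ->
    clopen_partition D -> clopen_partition (fun i => gam i @` D i) ->
    forall d : I, exists2 chi, G chi &
      (forall i, i != d -> forall x, D i x -> chi x = gam i x).

(* Main.v *)
Require Import Defs.
From mathcomp Require Import all_boot all_classical topology cantor.
From mathcomp Require Import classical_sets.

Local Open Scope classical_set_scope.

Definition sel3 {T : Type} (X0 X1 X2 : T) (i : 'I_3) : T :=
  if val i == 0%N then X0 else if val i == 1%N then X1 else X2.

Lemma part3 (X0 X1 X2 : set cantor_space) :
  clopen X0 -> clopen X1 -> clopen X2 ->
  (X0 !=set0) -> (X1 !=set0) -> (X2 !=set0) ->
  X0 `&` X1 = set0 -> X0 `&` X2 = set0 -> X1 `&` X2 = set0 ->
  (forall x, X0 x \/ X1 x \/ X2 x) ->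
  clopen_partition (sel3 X0 X1 X2).
Proof.
move=> c0 c1 c2 n0 n1 n2 d01 d02 d12 cov; split.
- by move=> [[|[|[|?]]] ?].
- by move=> [[|[|[|?]]] ?].
- move=> [[|[|[|i]]] hi] // [[|[|[|j]]] hj] // ne; rewrite /sel3 /=.
  all: try done.
  all: try by rewrite setIC.
- apply/seteqP; split => x // _.
  case: (cov x) => [h|[h|h]].
  + by exists (@Ordinal 3 0 isT).
  + by exists (@Ordinal 3 1 isT).
  + by exists (@Ordinal 3 2 isT).
Qed.
Lemma KC_of (U : set C) (z : C) : clopen U -> (U !=set0) -> ~ U z -> K_C U.
Proof.
move=> cU nU Uz; split => //; split => //.
by apply/eqP => E; apply: Uz; rewrite E.
Qed.

Lemma swap_lemma (G : set (C -> C)) :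
  homeo_subgroup G -> approximately_full G -> flexible G ->
  forall P V : set C, clopen P -> clopen V -> (P !=set0) -> (V !=set0) ->
  P `&` V = set0 -> forall z, ~ (P z \/ V z) ->
  exists2 chi, G chi &
    (forall x, chi x <> x -> P x \/ V x) /\ (forall x, P x -> V (chi x)).
Proof.
move=> [Hh Hid Hcomp Hinv] Haf Hflex P V cP cV [p0 Pp0] nV dPV z Hz.
have PVz : forall x, P x -> V x -> False.
  by move=> x Px Vx; have : (P `&` V) x by []; rewrite dPV.
have [f Gf fPV] : exists2 f, G f & f @` (P `|` V) `<=` V.
  apply: Hflex.
  - apply: (@KC_of _ z) => //; first exact: clopenU.
    by exists p0; left.
  - by apply: (@KC_of _ z) => // Vz; apply: Hz; right.
have fV : forall x, P x \/ V x -> V (f x).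
  by move=> x hx; apply: fPV; exists x.
have [fi Gfi [ffi fif]] := Hinv f Gf.
have [cfi _] := Hh fi Gfi.
set Q := f @` P.
have QE : Q = fi @^-1` P.
  apply/seteqP; split => y /=.
  - by case=> x Px <-; rewrite ffi.
  - by move=> Py; exists (fi y) => //; rewrite fif.
have cQ : clopen Q by rewrite QE; exact: preimage_clopen.
have QV : forall y, Q y -> V y by move=> y [x Px <-]; apply: fV; left.
set R := ~` (P `|` Q).
have cR : clopen R by apply: (@clopenC _ _ set0); exact: clopenU.
have fp0 : V (f p0) by apply: fV; left.
have fnid : f <> id by move=> E; apply: (PVz p0) => //; rewrite -[p0]/(id p0) -E.
have finid : fi <> id.
  by move=> E; apply: (PVz p0) => //; rewrite -[p0](ffi p0) E.
have ffi' : f <> fi.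
  move=> E; apply: (PVz p0) => //; rewrite -[p0](ffi p0) -E; apply: fV; right.
  exact: fp0.
pose D := sel3 P Q R.
pose gam := sel3 f fi id.
have Hpart : clopen_partition D.
  apply: part3 => //.
  - by exists p0.
  - by exists (f p0); rewrite /Q; exists p0.
  - by exists z => /= -[hz|hz]; apply: Hz; [left|right; exact: QV].
  - by apply/seteqP; split => y // [Py Qy]; apply: (PVz y) => //; exact: QV.
  - by apply/seteqP; split => y // [Py Ry]; apply: Ry; left.
  - by apply/seteqP; split => y // [Qy Ry]; apply: Ry; right.
  - by move=> y; have [Py|nPy] := pselect (P y); [left|right;
      have [Qy|nQy] := pselect (Q y); [left|right => /= -[]]].
have Himg : (fun i => gam i @` D i) = sel3 Q P R.
  apply: funext => -[[|[|[|i]]] hi] //; rewrite /gam /D /sel3 /=.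
  - apply/seteqP; split => y /=.
    + by case=> x [x' Px' <-] <-; rewrite ffi.
    + by move=> Py; exists (f y); [exists y|rewrite ffi].
  - exact: image_id.
have Hpart2 : clopen_partition (fun i => gam i @` D i).
  rewrite Himg; apply: part3 => //.
  - by exists (f p0); rewrite /Q; exists p0.
  - by exists p0.
  - by exists z => /= -[hz|hz]; apply: Hz; [left|right; exact: QV].
  - by apply/seteqP; split => y // [Qy Py]; apply: (PVz y) => //; exact: QV.
  - by apply/seteqP; split => y // [Qy Ry]; apply: Ry; right.
  - by apply/seteqP; split => y // [Py Ry]; apply: Ry; left.
  - by move=> y; have [Py|nPy] := pselect (P y); [right; left|
      have [Qy|nQy] := pselect (Q y); [left|right; right => /= -[]]].
have Hinj : injective gam.
  move=> [[|[|[|i]]] hi] // [[|[|[|j]]] hj] //; rewrite /gam /sel3 /= => E.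
  all: try by apply: val_inj.
  all: try by exfalso; apply: fnid.
  all: try by exfalso; apply: finid.
  all: try by exfalso; apply: ffi'.
have HG : forall i, G (gam i).
  by move=> [[|[|[|i]]] hi] //; rewrite /gam /sel3.
have [chi Gchi Hchi] := Haf _ gam D Hinj HG Hpart Hpart2 (@Ordinal 3 1 isT).
have chiP : forall x, P x -> chi x = f x.
  by move=> x Px; exact: (Hchi (@Ordinal 3 0 isT)).
have chiR : forall x, R x -> chi x = x.
  by move=> x Rx; exact: (Hchi (@Ordinal 3 2 isT)).
exists chi => //; split.
- move=> x hx; have [Px|nPx] := pselect (P x); first by left.
  have [Qx|nQx] := pselect (Q x); first by right; exact: QV.
  by exfalso; apply: hx; apply: chiR => /= -[].
- by move=> x Px; rewrite chiP //; apply: fV; left.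
Qed.

Theorem lemma2p14 (G : set (cantor_space -> cantor_space)) :
  homeo_subgroup G -> approximately_full G -> (flexible G <-> vigorous G).
Proof.
move=> Hsub Haf; split; last first.
  move=> Hv U V [cU [nU UT]] [cV [nV VT]].
  have [g Gg [_ h]] := Hv setT U V clopenT cU cV nU (fun _ _ => I) UT
                         nV (fun _ _ => I) VT.
  by exists g.
move=> Hflex A B D cA cB cD nB sBA neBA nD sDA neDA.
have [AT|AT] := pselect (A = setT).
  subst A.
  have [g Gg h] := Hflex B D (conj cB (conj nB neBA)) (conj cD (conj nD neDA)).
  by exists g.
have [z nAz] : exists z, ~ A z.
  apply: contra_notP AT => H; apply/seteqP; split => x // _.
  by apply: contra_notP H => Ax; exists x.
have [BD0|BDn] := pselect (B `&` D = set0).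
  have [chi Gchi [hs hi]] := @swap_lemma _ Hsub Haf Hflex _ _ cB cD nB nD BD0
    z (fun h => nAz (match h with or_introl b => sBA _ b | or_intror d => sDA _ d end)).
  exists chi => //; split.
  - by move=> x /hs [/sBA|/sDA].
  - by move=> y [x Bx <-]; apply: hi.
have [x0 [Ax0 nBx0]] : exists x, A x /\ ~ B x.
  apply: contra_notP (negP neBA) => H; apply/eqP; apply/seteqP; split => // x Ax.
  by apply: contra_notP H => nBx; exists x.
pose X := A `&` ~` B.
have cX : clopen X by apply: clopenI => //; exact: (@clopenC _ _ set0).
have nX : X !=set0 by exists x0.
have nY : (D `&` B) !=set0 by apply/set0P/eqP; rewrite setIC.
have cY : clopen (D `&` B) by exact: clopenI.
have [chi1 G1 [hs1 hi1]] := @swap_lemma _ Hsub Haf Hflex _ _ cB cX nB nX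
   (ltac:(by apply/seteqP; split => x // [Bx [_ nBx]])) z
   (fun h => nAz (match h with or_introl b => sBA _ b | or_intror d => d.1 end)).
have [chi2 G2 [hs2 hi2]] := @swap_lemma _ Hsub Haf Hflex _ _ cX cY nX nY
   (ltac:(by apply/seteqP; split => x // [[_ nBx] [_ Bx]])) z
   (fun h => nAz (match h with or_introl b => b.1 | or_intror d => sDA _ d.1 end)).
have [_ _ Hc _] := Hsub.
exists (chi2 \o chi1); first exact: Hc.
split.
- move=> x /= hx.
  have [e|ne] := pselect (chi1 x = x).
  + have hx2 : chi2 x <> x by rewrite -{1}e.
    by case: (hs2 x hx2) => [[]|[/sDA]].
  + by case: (hs1 x ne) => [/sBA|[]].
- by move=> y [x Bx <-] /=; case: (hi2 _ (hi1 x Bx)).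
Qed.
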